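(* Let $\mathfrak g$ be a real Lie algebra of dimension $4$ endowed with a generalized complex structure $(J,R,\sigma)$ of type $1$. Put $\mathfrak h=\operatorname{Im}R$ and $\mathfrak p=\ker\sigma$. Then $\mathfrak g=\mathfrak h\oplus\mathfrak p$. Moreover, for any basis $(e_1,e_2)$ of $\mathfrak h$ and any nonzero $e_3\in\mathfrak p$, setting $e_4=Je_3$, $(e_1,e_2,e_3,e_4)$ is a basis of $\mathfrak g$ and: 1. $J=\lambda(E_{11}+E_{22})+E_{34}-E_{43}$, $R=a\,e_{12}^{\#}$ and $\sigma=a^{-1}(1+\lambda^2)e^{12}_{\#}$ for some $\lambda\in\mathbb R$ and $a\neq0$. 2. There are real numbers $a_1,a_2,b_1,\dots,b_4,x_1,x_2,y_1,y_2,p_1,p_2,q_1,q_2,r_1,r_2$ such that the Lie brackets are $[e_1,e_2]=a_1e_1+a_2e_2$, $[e_3,e_4]=b_1e_1+b_2e_2+b_3e_3+b_4e_4$, $[e_1,e_3]=x_1e_3-y_1e_4-p_1e_1-r_1e_2$, $[e_1,e_4]=y_1e_3+x_1e_4-p_2e_1-r_2e_2$, $[e_2,e_3]=x_2e_3-y_2e_4-q_1e_1+p_1e_2$, $[e_2,e_4]=y_2e_3+x_2e_4-q_2e_1+p_2e_2$. 3. For brackets of the form in item 2, the Jacobi identity is equivalent to the system $a_1x_1+a_2x_2=0$, $a_1y_1+a_2y_2=0$, $a_1p_1+a_2q_1-p_1x_2+p_2y_2+q_1x_1-q_2y_1=0$, $a_1r_1-a_2p_1-p_1x_1+p_2y_1-r_1x_2+r_2y_2=0$,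 $a_1p_2+a_2q_2-p_1y_2-p_2x_2+q_1y_1+q_2x_1=0$, $a_1r_2-a_2p_2-p_1y_1-p_2x_1-r_1y_2-r_2x_2=0$, $a_1b_2-2b_1x_1-b_3p_1-b_4p_2+q_1r_2-q_2r_1=0$, $a_2b_2-2b_2x_1-b_3r_1-b_4r_2-2p_1r_2+2p_2r_1=0$, $-b_3x_1+b_4y_1+p_1y_1-p_2x_1+r_1y_2-r_2x_2=0$, $-b_3y_1-b_4x_1+p_1x_1+p_2y_1+r_1x_2+r_2y_2=0$, $-a_1b_1-2b_1x_2-b_3q_1-b_4q_2+2p_1q_2-2p_2q_1=0$, $-a_2b_1-2b_2x_2+b_3p_1+b_4p_2-q_1r_2+q_2r_1=0$, $-b_3x_2+b_4y_2-p_1y_2+p_2x_2+q_1y_1-q_2x_1=0$, $-b_3y_2-b_4x_2-p_1x_2-p_2y_2+q_1x_1+q_2y_1=0$.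
   Context: Let $\mathfrak g$ be a real finite-dimensional Lie algebra, $\Phi(\mathfrak g)=\mathfrak g\oplus\mathfrak g^*$ with the neutral pairing $\langle u+\alpha,v+\beta\rangle=\tfrac12(\alpha(v)+\beta(u))$ and the bracket $[u+\alpha,v+\beta]=[u,v]+\mathrm{ad}_u^t\beta-\mathrm{ad}_v^t\alpha$, where $(\mathrm{ad}_u^t\alpha)(v)=-\alpha([u,v])$. A generalized complex structure on $\mathfrak g$ is an endomorphism $K$ of $\Phi(\mathfrak g)$ with $K^2=-\mathrm{Id}$, $\langle Ka,b\rangle+\langle a,Kb\rangle=0$ for all $a,b$, and vanishing Nijenhuis torsion $N_K(a,b)=[Ka,Kb]-K[Ka,b]-K[a,Kb]+K^2[a,b]$. Writing $K=\begin{pmatrix}J&R\\ \sigma&-J^*\end{pmatrix}$ with $J\in\mathrm{End}(\mathfrak g)$ and skew-symmetric $R:\mathfrak g^*\to\mathfrak g$, $\sigma:\mathfrak g\to\mathfrak g^*$, the triple $(J,R,\sigma)$ is also called a generalized complex structure on $\mathfrak g$. Its type is $\tfrac12\dim(\operatorname{Im}R)^0$ (annihilator); for $\dim\mathfrak g=4$, type $0$ means $R$ invertible, type $1$ means $\operatorname{rank}R=2$, type $2$ means $R=0$. Notation: for a basis $(e_i)$ with dual basis $(e^i)$, $E_{ij}$ is the endomorphism sending $e_j$ to $e_i$ and vanishing on $e_k$, $k\ne j$; $e_{ij}=e_i\wedge e_j$, $e^{ij}=e^i\wedge e^j$; for $\pi\in\wedge^2\mathfrak g$, $\pi^\#:\mathfrak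 g^*\to\mathfrak g$ is defined by $\beta(\pi^\#(\alpha))=\pi(\alpha,\beta)$; for $\omega\in\wedge^2\mathfrak g^*$, $\omega_\#:\mathfrak g\to\mathfrak g^*$ is $u\mapsto i_u\omega$. Thus $e_{12}^\#=(e_1\wedge e_2)^\#$ and $e^{12}_\#=(e^1\wedge e^2)_\#$. *)

(* Defs.v *)
(* The 4-dimensional real Lie algebra g is modelled on
   row vectors 'rV[R]_4 (R : realType); g^* is also modelled on 'rV[R]_4 with
   the evaluation pairing [ev]. Linear maps act on the right of row vectors:
   J : g -> g is u |-> u *m J, R : g^* -> g is a |-> a *m Rm,
   sigma : g -> g^* is u |-> u *m S. *)
From HB Require Import structures.
From mathcomp Require Import all_boot all_order all_algebra.
From mathcomp Require Import reals.

Set Implicit Arguments.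
Unset Strict Implicit.
Unset Printing Implicit Defensive.

Import Order.TTheory GRing.Theory Num.Theory.
Local Open Scope ring_scope.

Section Defs.
Variable R : realType.

Notation vec := 'rV[R]_4.

Definition ev (a v : vec) : R := \sum_(i < 4) a 0 i * v 0 i.

Definition stdb (j : 'I_4) : vec := delta_mx 0 j.

Definition bilinear_br (br : vec -> vec -> vec) : Prop :=
  forall (c : R) (u v w : vec),
    br (c *: u + v) w = c *: br u w + br v w /\
    br w (c *: u + v) = c *: br w u + br w v.
Definition alternating_br (br : vec -> vec -> vec) : Prop :=
  forall u, br u u = 0.
Definition jacobi_br (br : vec -> vec -> vec) : Prop :=
  forall u v w, br u (br v w) + br v (br w u) + br w (br u v) = 0.
Definition lie_bracket (br : vec -> vec -> vec) : Prop :=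
  [/\ bilinear_br br, alternating_br br & jacobi_br br].

(* Phi(g) = g (+) g^*, elements are pairs (u, alpha) *)
Definition phi := (vec * vec)%type.
Definition padd (x y : phi) : phi := (x.1 + y.1, x.2 + y.2).
Definition popp (x : phi) : phi := (- x.1, - x.2).
Definition psub (x y : phi) : phi := padd x (popp y).
Definition pzero : phi := (0, 0).

Definition pairing (x y : phi) : R := 2^-1 * (ev x.2 y.1 + ev y.2 x.1).

(* ad_u^t a : the covector v |-> - a([u, v]) *)
Definition adt (br : vec -> vec -> vec) (u a : vec) : vec :=
  \row_j (- ev a (br u (stdb j))).

Definition dbracket (br : vec -> vec -> vec) (x y : phi) : phi :=
  (br x.1 y.1, adt br x.1 y.2 - adt br y.1 x.2).

(* K = ( J  R ; sigma  -J^* ), with (J^* a)(v) = a(J v), i.e. J^* a = a *m J^T *)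
Definition Kop (J Rm S : 'M[R]_4) (x : phi) : phi :=
  (x.1 *m J + x.2 *m Rm, x.1 *m S - x.2 *m J^T).

Definition nijenhuis (br : vec -> vec -> vec) (K : phi -> phi) (x y : phi) : phi :=
  padd (psub (psub (dbracket br (K x) (K y)) (K (dbracket br (K x) y)))
             (K (dbracket br x (K y))))
       (K (K (dbracket br x y))).

Definition gen_complex_op (br : vec -> vec -> vec) (K : phi -> phi) : Prop :=
  [/\ forall x, K (K x) = popp x,
      forall x y, pairing (K x) y + pairing x (K y) = 0
    & forall x y, nijenhuis br K x y = pzero].

Definition skew_dual (Rm : 'M[R]_4) : Prop :=
  forall a b : vec, ev b (a *m Rm) = - ev a (b *m Rm).
Definition skew_form (S : 'M[R]_4) : Prop :=
  forall u v : vec, ev (u *m S) v = - ev (v *m S) u.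

Definition gen_complex (br : vec -> vec -> vec) (J Rm S : 'M[R]_4) : Prop :=
  [/\ skew_dual Rm, skew_form S & gen_complex_op br (Kop J Rm S)].

(* type = 1/2 dim (Im R)^0 = (4 - dim Im R)/2 ; Im R is the row space of Rm *)
Definition gc_type (Rm : 'M[R]_4) : nat := (4 - \rank Rm)./2.

Definition in_imR (Rm : 'M[R]_4) (v : vec) : Prop := exists a : vec, v = a *m Rm.
Definition in_ker (S : 'M[R]_4) (u : vec) : Prop := u *m S = 0.

Definition basis_imR (Rm : 'M[R]_4) (e1 e2 : vec) : Prop :=
  [/\ in_imR Rm e1, in_imR Rm e2,
      (forall c1 c2 : R, c1 *: e1 + c2 *: e2 = 0 -> c1 = 0 /\ c2 = 0)
    & (forall v, in_imR Rm v -> exists c1 c2 : R, v = c1 *: e1 + c2 *: e2)].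

Definition basis4 (e1 e2 e3 e4 : vec) : Prop :=
  let s := [:: e1; e2; e3; e4] in
  (forall c : 'I_4 -> R, \sum_(i < 4) c i *: s`_i = 0 -> forall i, c i = 0) /\
  (forall v : vec, exists c : 'I_4 -> R, v = \sum_(i < 4) c i *: s`_i).

Definition mx4 (e1 e2 e3 e4 : vec) : 'M[R]_4 :=
  \matrix_(i < 4, j < 4) ([:: e1; e2; e3; e4]`_i) 0 j.

(* dual basis: e^i (as a covector), i.e. e^i(e_j) = delta_ij *)
Definition dualb (e1 e2 e3 e4 : vec) (i : 'I_4) : vec :=
  (col i (invmx (mx4 e1 e2 e3 e4)))^T.

(* (x /\ y)^# : a |-> a(x) y - a(y) x *)
Definition sharp2 (x y : vec) (a : vec) : vec := ev a x *: y - ev a y *: x.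
(* (al /\ be)_# : u |-> i_u (al /\ be) = al(u) be - be(u) al *)
Definition flat2 (al be : vec) (u : vec) : vec := ev al u *: be - ev be u *: al.

Definition bracket_form (br : vec -> vec -> vec) (e1 e2 e3 e4 : vec)
  (a1 a2 b1 b2 b3 b4 x1 x2 y1 y2 p1 p2 q1 q2 r1 r2 : R) : Prop :=
  [/\ br e1 e2 = a1 *: e1 + a2 *: e2,
      br e3 e4 = b1 *: e1 + b2 *: e2 + b3 *: e3 + b4 *: e4,
      br e1 e3 = x1 *: e3 - y1 *: e4 - p1 *: e1 - r1 *: e2
    & [/\ br e1 e4 = y1 *: e3 + x1 *: e4 - p2 *: e1 - r2 *: e2,
      br e2 e3 = x2 *: e3 - y2 *: e4 - q1 *: e1 + p1 *: e2
    & br e2 e4 = y2 *: e3 + x2 *: e4 - q2 *: e1 + p2 *: e2]].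

Definition jacobi_system
  (a1 a2 b1 b2 b3 b4 x1 x2 y1 y2 p1 p2 q1 q2 r1 r2 : R) : Prop :=
  (a1 * x1 + a2 * x2 = 0) /\
  (a1 * y1 + a2 * y2 = 0) /\
  (a1 * p1 + a2 * q1 - p1 * x2 + p2 * y2 + q1 * x1 - q2 * y1 = 0) /\
  (a1 * r1 - a2 * p1 - p1 * x1 + p2 * y1 - r1 * x2 + r2 * y2 = 0) /\
  (a1 * p2 + a2 * q2 - p1 * y2 - p2 * x2 + q1 * y1 + q2 * x1 = 0) /\
  (a1 * r2 - a2 * p2 - p1 * y1 - p2 * x1 - r1 * y2 - r2 * x2 = 0) /\
  (a1 * b2 - 2 * b1 * x1 - b3 * p1 - b4 * p2 + q1 * r2 - q2 * r1 = 0) /\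
  (a2 * b2 - 2 * b2 * x1 - b3 * r1 - b4 * r2 - 2 * p1 * r2 + 2 * p2 * r1 = 0) /\
  (- b3 * x1 + b4 * y1 + p1 * y1 - p2 * x1 + r1 * y2 - r2 * x2 = 0) /\
  (- b3 * y1 - b4 * x1 + p1 * x1 + p2 * y1 + r1 * x2 + r2 * y2 = 0) /\
  (- a1 * b1 - 2 * b1 * x2 - b3 * q1 - b4 * q2 + 2 * p1 * q2 - 2 * p2 * q1 = 0) /\
  (- a2 * b1 - 2 * b2 * x2 + b3 * p1 + b4 * p2 - q1 * r2 + q2 * r1 = 0) /\
  (- b3 * x2 + b4 * y2 - p1 * y2 + p2 * x2 + q1 * y1 - q2 * x1 = 0) /\
  (- b3 * y2 - b4 * x2 - p1 * x2 - p2 * y2 + q1 * x1 + q2 * y1 = 0).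

End Defs.

(* Main.v *)
Require Import Defs.
From HB Require Import structures.
From mathcomp Require Import all_boot all_order all_algebra.
From mathcomp Require Import reals.
From mathcomp Require Import ring lra.
Import GRing.Theory Num.Theory.
Local Open Scope ring_scope.
Set Implicit Arguments.
Unset Strict Implicit.
Unset Printing Implicit Defensive.

Section Gen.
Variable R : realType.
Notation vec := 'rV[R]_4.

Definition o0 : 'I_4 := @Ordinal 4 0 isT.
Definition o1 : 'I_4 := @Ordinal 4 1 isT.
Definition o2 : 'I_4 := @Ordinal 4 2 isT.
Definition o3 : 'I_4 := @Ordinal 4 3 isT.

Lemma sum4 (V : zmodType) (F : 'I_4 -> V) :
  \sum_(i < 4) F i = F o0 + F o1 + F o2 + F o3.
Proof.
rewrite !big_ord_recl big_ord0 addr0 !addrA.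
by congr (_ + _ + _ + _); congr F; apply: val_inj.
Qed.

Lemma ord4P (P : 'I_4 -> Prop) : P o0 -> P o1 -> P o2 -> P o3 -> forall i, P i.
Proof.
move=> H0 H1 H2 H3 [[|[|[|[|i]]]] Hi] //.
- by have -> : Ordinal Hi = o0 by apply: val_inj.
- by have -> : Ordinal Hi = o1 by apply: val_inj.
- by have -> : Ordinal Hi = o2 by apply: val_inj.
- by have -> : Ordinal Hi = o3 by apply: val_inj.
Qed.

Section Br.
Variable br : vec -> vec -> vec.
Hypothesis bil : bilinear_br br.

Lemma br0l w : br 0 w = 0.
Proof.
have := (bil 1 0 0 w).1; rewrite !scale1r addr0.
by move/(congr1 (fun x => x - br 0 w)); rewrite addrK subrr => <-.
Qed.
Lemma br0r w : br w 0 = 0.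
Proof.
have := (bil 1 0 0 w).2; rewrite !scale1r addr0.
by move/(congr1 (fun x => x - br w 0)); rewrite addrK subrr => <-.
Qed.
Lemma brDl u v w : br (u + v) w = br u w + br v w.
Proof. by have := (bil 1 u v w).1; rewrite !scale1r. Qed.
Lemma brDr u v w : br w (u + v) = br w u + br w v.
Proof. by have := (bil 1 u v w).2; rewrite !scale1r. Qed.
Lemma brZl c u w : br (c *: u) w = c *: br u w.
Proof. by have := (bil c u 0 w).1; rewrite !addr0 br0l addr0. Qed.
Lemma brZr c u w : br w (c *: u) = c *: br w u.
Proof. by have := (bil c u 0 w).2; rewrite !addr0 br0r addr0. Qed.
Lemma brNl u w : br (- u) w = - br u w.
Proof. by rewrite -scaleN1r brZl scaleN1r. Qed.
Lemma brNr u w : br w (- u) = - br w u.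
Proof. by rewrite -scaleN1r brZr scaleN1r. Qed.
Lemma brBl u v w : br (u - v) w = br u w - br v w.
Proof. by rewrite brDl brNl. Qed.
Lemma brBr u v w : br w (u - v) = br w u - br w v.
Proof. by rewrite brDr brNr. Qed.
Lemma br_suml n (F : 'I_n -> vec) w : br (\sum_(i < n) F i) w = \sum_(i < n) br (F i) w.
Proof.
elim: n F => [|n IH] F; first by rewrite !big_ord0 br0l.
by rewrite !big_ord_recr /= brDl IH.
Qed.
Lemma br_sumr n (F : 'I_n -> vec) w : br w (\sum_(i < n) F i) = \sum_(i < n) br w (F i).
Proof.
elim: n F => [|n IH] F; first by rewrite !big_ord0 br0r.
by rewrite !big_ord_recr /= brDr IH.
Qed.
Hypothesis alt : alternating_br br.
Lemma br_anti u v : br v u = - br u v.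
Proof.
have := alt (u + v); rewrite brDl !brDr !alt add0r addr0 => /eqP.
by rewrite addr_eq0 => /eqP ->; rewrite opprK.
Qed.
End Br.

Lemma ev_sym (a v : vec) : ev a v = ev v a.
Proof. by apply: eq_bigr => i _; rewrite mulrC. Qed.
Lemma evDr (a u v : vec) : ev a (u + v) = ev a u + ev a v.
Proof. by rewrite /ev -big_split; apply: eq_bigr => i _; rewrite mxE mulrDr. Qed.
Lemma evZr (a : vec) (c : R) (v : vec) : ev a (c *: v) = c * ev a v.
Proof. by rewrite /ev mulr_sumr; apply: eq_bigr => i _; rewrite mxE mulrCA. Qed.
Lemma ev0r (a : vec) : ev a 0 = 0.
Proof. by rewrite /ev big1 // => i _; rewrite mxE mulr0. Qed.
Lemma evNr (a v : vec) : ev a (- v) = - ev a v.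
Proof. by rewrite -scaleN1r evZr mulN1r. Qed.
Lemma evBr (a u v : vec) : ev a (u - v) = ev a u - ev a v.
Proof. by rewrite evDr evNr. Qed.
Lemma evDl (a b v : vec) : ev (a + b) v = ev a v + ev b v.
Proof. by rewrite ev_sym evDr !(ev_sym v). Qed.
Lemma evZl (a : vec) (c : R) (v : vec) : ev (c *: a) v = c * ev a v.
Proof. by rewrite ev_sym evZr ev_sym. Qed.
Lemma ev0l (v : vec) : ev 0 v = 0.
Proof. by rewrite ev_sym ev0r. Qed.
Lemma evNl (a v : vec) : ev (- a) v = - ev a v.
Proof. by rewrite ev_sym evNr ev_sym. Qed.
Lemma evBl (a b v : vec) : ev (a - b) v = ev a v - ev b v.
Proof. by rewrite evDl evNl. Qed.
Lemma ev_sumr n (F : 'I_n -> vec) (a : vec) : ev a (\sum_(i < n) F i) = \sum_(i < n) ev a (F i).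
Proof.
elim: n F => [|n IH] F; first by rewrite !big_ord0 ev0r.
by rewrite !big_ord_recr /= evDr IH.
Qed.
Lemma ev_sumr_scale n (F : 'I_n -> vec) (c : 'I_n -> R) (a : vec) :
  ev a (\sum_(i < n) c i *: F i) = \sum_(i < n) c i * ev a (F i).
Proof. by rewrite ev_sumr; apply: eq_bigr => i _; rewrite evZr. Qed.
Lemma evE (a v : vec) : ev a v = (a *m v^T) 0 0.
Proof. by rewrite mxE; apply: eq_bigr => i _; rewrite mxE. Qed.
Lemma ev_mulmx (a v : vec) (M : 'M[R]_4) : ev a (v *m M) = ev (a *m M^T) v.
Proof. by rewrite !evE trmx_mul mulmxA. Qed.
Lemma ev_stdb (j : 'I_4) (v : vec) : ev (stdb R j) v = v 0 j.
Proof.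
rewrite /ev (bigD1 j) //= big1 => [|i /negbTE ij]; first by rewrite mxE !eqxx mul1r addr0.
by rewrite mxE ij andbF mul0r.
Qed.
Lemma stdb_mul (i : 'I_4) (M : 'M[R]_4) (j : 'I_4) : (stdb R i *m M) 0 j = M i j.
Proof. by rewrite /stdb -rowE mxE. Qed.
Lemma ev_eq0 (a : vec) : (forall v, ev a v = 0) -> a = 0.
Proof. by move=> H; apply/rowP => j; rewrite mxE -(H (stdb R j)) ev_sym ev_stdb. Qed.
Lemma ev_inj (a b : vec) : (forall v, ev a v = ev b v) -> a = b.
Proof.
move=> H; apply/eqP; rewrite -subr_eq0; apply/eqP; apply: ev_eq0 => v.
by rewrite evBl H subrr.
Qed.
Lemma ev_adt (br : vec -> vec -> vec) : bilinear_br br ->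
  forall u a v : vec, ev (adt br u a) v = - ev a (br u v).
Proof.
move=> bil u a v.
rewrite {2}(row_sum_delta v) (br_sumr bil) ev_sumr /ev -sumrN.
apply: eq_bigr => j _; rewrite !mxE (brZr bil) /= -/(ev _ _) evZr /stdb.
by rewrite mulNr mulrC.
Qed.

Section Bas.
Variables f1 f2 f3 f4 : vec.
Let sq := [:: f1; f2; f3; f4].
Let M := mx4 f1 f2 f3 f4.
Lemma row_mx4 (i : 'I_4) : row i M = sq`_i.
Proof. by apply/rowP => k; rewrite !mxE. Qed.
Lemma mul_mx4 (w : vec) : w *m M = \sum_(i < 4) w 0 i *: sq`_i.
Proof. by rewrite mulmx_sum_row; apply: eq_bigr => i _; rewrite row_mx4. Qed.
Hypothesis ind : forall c : 'I_4 -> R, \sum_(i < 4) c i *: sq`_i = 0 -> forall i, c i = 0.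
Lemma mx4_unit : M \in unitmx.
Proof.
rewrite -row_free_unit; apply: inj_row_free => w.
rewrite mul_mx4 => /ind H; apply/rowP => i; by rewrite H mxE.
Qed.
Lemma basis4_of_indep : basis4 f1 f2 f3 f4.
Proof.
split; first exact: ind.
move=> v; exists (fun i => (v *m invmx M) 0 i).
by rewrite -mul_mx4 mulmxKV // mx4_unit.
Qed.
Lemma dualbE (i j : 'I_4) : ev (dualb f1 f2 f3 f4 i) sq`_j = (i == j)%:R.
Proof.
have := mulmxV mx4_unit; move/matrixP/(_ j i); rewrite !mxE eq_sym => <-.
rewrite /ev; apply: eq_bigr => k _; rewrite !mxE mulrC.
by [].
Qed.
End Bas.

Lemma basis_ev0 f1 f2 f3 f4 (a : vec) : basis4 f1 f2 f3 f4 ->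
  (forall i : 'I_4, ev a [:: f1; f2; f3; f4]`_i = 0) -> a = 0.
Proof.
move=> [_ Sp] H; apply: ev_eq0 => v; case: (Sp v) => c ->.
by rewrite ev_sumr_scale big1 // => i _; rewrite H mulr0.
Qed.
End Gen.


Section P3.
Variable R : realType.
Notation vec := 'rV[R]_4.
Variables (a1 a2 b1 b2 b3 b4 x1 x2 y1 y2 p1 p2 q1 q2 r1 r2 : R).

Definition tb : seq (seq (seq R)) :=
 [:: [:: [::0;0;0;0]; [::a1;a2;0;0]; [::-p1;-r1;x1;-y1]; [::-p2;-r2;y1;x1]];
     [:: [::-a1;-a2;0;0]; [::0;0;0;0]; [::-q1;p1;x2;-y2]; [::-q2;p2;y2;x2]];
     [:: [::p1;r1;-x1;y1]; [::q1;-p1;-x2;y2]; [::0;0;0;0]; [::b1;b2;b3;b4]];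
     [:: [::p2;r2;-y1;-x1]; [::q2;-p2;-y2;-x2]; [::-b1;-b2;-b3;-b4]; [::0;0;0;0]]].
Definition cbr (i j k : 'I_4) : R := nth 0 (nth [::] (nth [::] tb i) j) k.
Definition Jc (i j k l : 'I_4) : R :=
  \sum_(m < 4) (cbr j k m * cbr i m l + cbr k i m * cbr j m l + cbr i j m * cbr k m l).

Lemma Jc_zero : jacobi_system a1 a2 b1 b2 b3 b4 x1 x2 y1 y2 p1 p2 q1 q2 r1 r2 ->
  forall i j k l, Jc i j k l = 0.
Proof.
move=> [E0 [E1 [E2 [E3 [E4 [E5 [E6 [E7 [E8 [E9 [E10 [E11 [E12 E13]]]]]]]]]]]]].
apply: ord4P; apply: ord4P; apply: ord4P; apply: ord4P; rewrite /Jc sum4 /cbr /=;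
  first [ring | lra].
Qed.

Lemma Jc_sys : (forall i j k l, Jc i j k l = 0) ->
  jacobi_system a1 a2 b1 b2 b3 b4 x1 x2 y1 y2 p1 p2 q1 q2 r1 r2.
Proof.
move=> E.
have F := fun i j k l => E i j k l; rewrite /Jc in F.
move: (F o0 o1 o2 o0) (F o0 o1 o2 o1) (F o0 o1 o2 o2) (F o0 o1 o2 o3)
      (F o0 o1 o3 o0) (F o0 o1 o3 o1) (F o0 o2 o3 o0) (F o0 o2 o3 o1)
      (F o0 o2 o3 o2) (F o0 o2 o3 o3) (F o1 o2 o3 o0) (F o1 o2 o3 o1)
      (F o1 o2 o3 o2) (F o1 o2 o3 o3).
rewrite !sum4 /cbr /= => e2 e3 e0 e1 e4 e5 e6 e7 e8 e9 e10 e11 e12 e13.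
by do 13 (split; first lra); lra.
Qed.

Variables (br : vec -> vec -> vec) (f1 f2 f3 f4 : vec).
Hypothesis bil : bilinear_br br.
Hypothesis alt : alternating_br br.
Hypothesis bas : basis4 f1 f2 f3 f4.
Hypothesis bf : bracket_form br f1 f2 f3 f4 a1 a2 b1 b2 b3 b4 x1 x2 y1 y2 p1 p2 q1 q2 r1 r2.

Definition sb := [:: f1; f2; f3; f4].
Definition lc (c : 'I_4 -> R) : vec := \sum_(i < 4) c i *: sb`_i.

Ltac fin := apply/rowP => k; rewrite !mxE; ring.

Lemma brf : forall i j : 'I_4, br sb`_i sb`_j = lc (cbr i j).
Proof.
case: bf => H12 H34 H13 [H14 H23 H24].
have A := br_anti bil alt.
apply: ord4P; apply: ord4P; rewrite /lc sum4 /cbr /=;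
 rewrite ?alt ?(A f1 f2) ?(A f1 f3) ?(A f1 f4) ?(A f2 f3) ?(A f2 f4) ?(A f3 f4)
   ?H12 ?H34 ?H13 ?H14 ?H23 ?H24; fin.
Qed.

Lemma br_lc (i : 'I_4) c :
  br sb`_i (lc c) = lc (fun l => \sum_(m < 4) c m * cbr i m l).
Proof.
rewrite {1}/lc (br_sumr bil).
under eq_bigr => m _ do rewrite (brZr bil) brf /lc scaler_sumr.
under eq_bigr => m _ do under eq_bigr => l _ do rewrite scalerA.
rewrite exchange_big /lc; apply: eq_bigr => l _; by rewrite scaler_suml.
Qed.

Lemma lc_ext c d : (forall l, c l = d l) -> lc c = lc d.
Proof. by move=> E; apply: eq_bigr => l _; rewrite E. Qed.

Lemma lcD c d : lc c + lc d = lc (fun l => c l + d l).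
Proof. by rewrite /lc -big_split; apply: eq_bigr => l _; rewrite scalerDl. Qed.

Definition jac u v w := br u (br v w) + br v (br w u) + br w (br u v).

Lemma jac_s (i j k : 'I_4) : jac sb`_i sb`_j sb`_k = lc (Jc i j k).
Proof.
rewrite /jac !brf !br_lc !lcD /Jc; apply: lc_ext => l.
by rewrite -!big_split.
Qed.

Lemma jac_cyc u v w : jac u v w = jac v w u.
Proof. by rewrite /jac [RHS]addrC addrA. Qed.

Lemma jac_lin1 c v w : jac (lc c) v w = \sum_(i < 4) c i *: jac sb`_i v w.
Proof.
rewrite /jac /lc !(br_suml bil) !(br_sumr bil) ?(br_suml bil).
rewrite -!big_split; apply: eq_bigr => i _ /=.
by rewrite !(brZl bil) !(brZr bil) ?(brZl bil) !scalerDr.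
Qed.

Lemma lc_all v : exists c, v = lc c.
Proof. by case: bas => _ H; case: (H v) => c ->; exists c. Qed.

Lemma part3 : jacobi_br br <-> jacobi_system a1 a2 b1 b2 b3 b4 x1 x2 y1 y2 p1 p2 q1 q2 r1 r2.
Proof.
split.
  move=> HJ; apply: Jc_sys => i j k.
  have : jac sb`_i sb`_j sb`_k = 0 by apply: HJ.
  rewrite jac_s.
  by case: bas => I _; move/I.
move/Jc_zero => Z.
have S3 : forall i j k : 'I_4, jac sb`_i sb`_j sb`_k = 0.
  move=> i j k; rewrite jac_s.
  rewrite (@lc_ext _ (fun _ => 0)) // /lc big1 // => l _; by rewrite scale0r.
have S2 : forall (i j : 'I_4) w, jac sb`_i sb`_j w = 0.
  move=> i j w; case: (lc_all w) => c ->.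
  rewrite -jac_cyc jac_lin1 big1 // => k _.
  by rewrite jac_cyc S3 scaler0.
have S1 : forall (i : 'I_4) v w, jac sb`_i v w = 0.
  move=> i v w; case: (lc_all v) => c ->.
  rewrite jac_cyc jac_lin1 big1 // => k _.
  by rewrite -jac_cyc S2 scaler0.
move=> u v w; case: (lc_all u) => c ->.
change (jac (lc c) v w = 0); rewrite jac_lin1 big1 // => k _.
by rewrite S1 scaler0.
Qed.
End P3.


Section Core.
Variable R : realType.
Notation vec := 'rV[R]_4.
Variables (br : vec -> vec -> vec) (J Rm S : 'M[R]_4).
Hypotheses (bil : bilinear_br br) (alt : alternating_br br).
Hypotheses (sR : skew_dual Rm) (sS : skew_form S).
Hypothesis KK : forall x, Kop J Rm S (Kop J Rm S x) = popp x.
Hypothesis HN : forall x y, nijenhuis br (Kop J Rm S) x y = pzero R.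

Lemma KK1 (u : vec) : u *m J *m J + u *m S *m Rm = - u.
Proof.
have := KK (u, 0); rewrite /Kop /popp /= => -[E1 E2].
by move: E1; rewrite !mul0mx addr0 subr0.
Qed.
Lemma KK2 (u : vec) : u *m J *m S = u *m S *m J^T.
Proof.
have := KK (u, 0); rewrite /Kop /popp /= => -[E1 E2].
move: E2; rewrite !mul0mx addr0 subr0 oppr0 => /eqP; rewrite subr_eq0.
by move/eqP.
Qed.
Lemma KK3 (a : vec) : a *m Rm *m J = a *m J^T *m Rm.
Proof.
have := KK (0, a); rewrite /Kop /popp /= => -[E1 E2].
move: E1; rewrite !mul0mx add0r sub0r oppr0 mulNmx => /eqP; rewrite addr_eq0 opprK.
by move/eqP.
Qed.
Lemma KK4 (a : vec) : a *m Rm *m S + a *m J^T *m J^T = - a.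
Proof.
have := KK (0, a); rewrite /Kop /popp /= => -[E1 E2].
by move: E2; rewrite !mul0mx add0r sub0r mulNmx opprK.
Qed.

Lemma evS0 (u : vec) : ev (u *m S) u = 0.
Proof. by have := sS u u => /eqP; rewrite -addr_eq0 -mulr2n mulrn_eq0 /= => /eqP. Qed.
Lemma evR0 (a : vec) : ev a (a *m Rm) = 0.
Proof. by have := sR a a => /eqP; rewrite -addr_eq0 -mulr2n mulrn_eq0 /= => /eqP. Qed.

Section Basis.
Variables e1 e2 : vec.
Hypothesis hb : basis_imR Rm e1 e2.

Lemma hind c1 c2 : c1 *: e1 + c2 *: e2 = 0 -> c1 = 0 /\ c2 = 0.
Proof. by case: hb => _ _ H _; apply: H. Qed.
Lemma hspan v : in_imR Rm v -> exists c1 c2, v = c1 *: e1 + c2 *: e2.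
Proof. by case: hb => _ _ _ H; apply: H. Qed.
Lemma e1_neq0 : e1 != 0.
Proof.
apply/eqP => E; have [] := @hind 1 0; last by move/eqP; rewrite oner_eq0.
by rewrite E scaler0 scale0r addr0.
Qed.
Lemma e2_neq0 : e2 != 0.
Proof.
apply/eqP => E; have [] := @hind 0 1; last by move=> _ /eqP; rewrite oner_eq0.
by rewrite E scaler0 scale0r addr0.
Qed.

Variables a1 a2 : vec.
Hypotheses (Ha1 : e1 = a1 *m Rm) (Ha2 : e2 = a2 *m Rm).
Let m := ev a2 e1.
Lemma ev11 : ev a1 e1 = 0. Proof. by rewrite Ha1 evR0. Qed.
Lemma ev22 : ev a2 e2 = 0. Proof. by rewrite Ha2 evR0. Qed.
Lemma ev12 : ev a1 e2 = - m.
Proof. by rewrite /m Ha1 Ha2 sR. Qed.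

Lemma Rcoef b : exists c1 c2, [/\ b *m Rm = c1 *: e1 + c2 *: e2,
   ev b e1 = c2 * m & ev b e2 = - (c1 * m)].
Proof.
have [c1 [c2 E]] := hspan (ex_intro _ b erefl).
exists c1, c2; split => //.
  have := sR a1 b; rewrite -Ha1 E evDr !evZr ev11 ev12; lra.
have := sR a2 b; rewrite -Ha2 E evDr !evZr ev22 -/m; lra.
Qed.

Lemma m_neq0 : m != 0.
Proof.
apply/eqP => m0; move/eqP: e1_neq0; apply.
apply: ev_eq0 => b; have [c1 [c2 [_ E _]]] := Rcoef b.
by rewrite ev_sym E m0 mulr0.
Qed.

Lemma Rform b : b *m Rm = m^-1 *: sharp2 e1 e2 b.
Proof.
have [c1 [c2 [E E1 E2]]] := Rcoef b.
rewrite E /sharp2 E1 E2; have := m_neq0 => mn.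
apply/rowP => k; rewrite !mxE; field.
by [].
Qed.

Lemma evJsym (a b : vec) : ev b (a *m Rm *m J) = - ev a (b *m Rm *m J).
Proof. by rewrite (KK3 a) sR [in RHS]ev_mulmx. Qed.

Lemma lam_ex : exists lam, e1 *m J = lam *: e1 /\ e2 *m J = lam *: e2.
Proof.
have h1 : in_imR Rm (e1 *m J) by exists (a1 *m J^T); rewrite Ha1 KK3.
have h2 : in_imR Rm (e2 *m J) by exists (a2 *m J^T); rewrite Ha2 KK3.
have [c11 [c12 E1]] := hspan h1.
have [c21 [c22 E2]] := hspan h2.
have mn := m_neq0.
have H11 := evJsym a1 a1; rewrite -Ha1 E1 evDr !evZr ev11 ev12 in H11.
have H22 := evJsym a2 a2; rewrite -Ha2 E2 evDr !evZr ev22 -/m in H22.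
have H12 := evJsym a1 a2; rewrite -Ha1 -Ha2 E1 E2 !evDr !evZr ev11 ev12 ev22 -/m in H12.
have c12z : c12 = 0.
  have : c12 * m = 0 by lra.
  by move/eqP; rewrite mulf_eq0 (negbTE mn) orbF => /eqP.
have c21z : c21 = 0.
  have : c21 * m = 0 by lra.
  by move/eqP; rewrite mulf_eq0 (negbTE mn) orbF => /eqP.
have c22e : c22 = c11.
  have : (c22 - c11) * m = 0 by lra.
  by move/eqP; rewrite mulf_eq0 (negbTE mn) orbF subr_eq0 => /eqP.
exists c11; rewrite E1 E2 c12z c21z c22e !scale0r addr0 add0r; by [].
Qed.

Section Lam.
Variable lam : R.
Hypotheses (HJ1 : e1 *m J = lam *: e1) (HJ2 : e2 *m J = lam *: e2).

Lemma Jh v : in_imR Rm v -> v *m J = lam *: v.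
Proof.
move/hspan => [c1 [c2 ->]].
by rewrite mulmxDl -!scalemxAl HJ1 HJ2 scalerDr !scalerA mulrC [c2 * _]mulrC.
Qed.

Let sg := ev (e1 *m S) e2.
Lemma sg_eq : m^-1 * sg = 1 + lam ^+ 2.
Proof.
have := KK1 e1; rewrite HJ1 -scalemxAl HJ1 Rform /sharp2 evS0 -/sg scale0r sub0r.
move=> E.
have : (lam * lam - m^-1 * sg + 1) *: e1 = 0.
  rewrite -[RHS](subrr (- e1)); rewrite -{1}E.
  by apply/rowP => k; rewrite !mxE; ring.
move/eqP; rewrite scaler_eq0 (negbTE e1_neq0) orbF => /eqP H.
by rewrite expr2; lra.
Qed.

Lemma lam_pos : 1 + lam ^+ 2 != 0.
Proof. by rewrite lt0r_neq0 // ltr_pwDl // sqr_ge0. Qed.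

Lemma indep_y (y : vec) : y *m J *m J = - y -> y != 0 -> basis4 e1 e2 y (y *m J).
Proof.
move=> Hy yn; apply: basis4_of_indep => c; rewrite sum4 /= => E.
have EJ : (c o0 *: e1 + c o1 *: e2 + c o2 *: y + c o3 *: (y *m J)) *m J *m J = 0 *m J *m J
  by rewrite E.
rewrite !mulmxDl -!scalemxAl HJ1 HJ2 -!scalemxAl HJ1 HJ2 in EJ. rewrite Hy mulNmx !mul0mx in EJ.
have E2 : (1 + lam ^+ 2) *: (c o0 *: e1 + c o1 *: e2) = 0.
  rewrite -[RHS]addr0 -{1}E -EJ.
  by move: (y *m J) => z; apply/rowP => k; rewrite !mxE; ring.
move/eqP: E2; rewrite scaler_eq0 (negbTE lam_pos) /= => /eqP /hind [c0 c1].
rewrite c0 c1 !scale0r !add0r in E.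
have EJ1 : (c o2 *: y + c o3 *: (y *m J)) *m J = 0 *m J by rewrite E.
rewrite !mulmxDl -!scalemxAl Hy mul0mx in EJ1.
have E3 : (c o2 ^+ 2 + c o3 ^+ 2) *: y = 0.
  rewrite -[RHS](subrr 0) -{1}(scaler0 _ (c o2)) -{1}E -(scaler0 _ (c o3)) -EJ1.
  by move: (y *m J) => z; apply/rowP => k; rewrite !mxE; ring.
move/eqP: E3; rewrite scaler_eq0 (negbTE yn) orbF => /eqP E3.
have c2 : c o2 = 0 by nra.
have c3 : c o3 = 0 by nra.
by apply: ord4P.
Qed.

Lemma evSJ (y z : vec) : ev (y *m S) (z *m J) = ev (y *m J *m S) z.
Proof. by rewrite ev_mulmx KK2. Qed.

Lemma pker (y : vec) : y *m J *m J = - y -> y *m S = 0.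
Proof.
move=> Hy; have [->|yn] := eqVneq y 0; first by rewrite mul0mx.
have hz : forall z, in_imR Rm z -> ev (y *m S) z = 0.
  move=> z hz.
  have E : ev (y *m S) (z *m J *m J) = - ev (y *m S) z.
    by rewrite evSJ evSJ Hy mulNmx evNl.
  have hzJ : in_imR Rm (z *m J) by case: hz => a ->; exists (a *m J^T); rewrite KK3.
  rewrite (Jh hzJ) (Jh hz) scalerA evZr in E.
  have : (1 + lam ^+ 2) * ev (y *m S) z = 0 by rewrite expr2; lra.
  by move/eqP; rewrite mulf_eq0 (negbTE lam_pos) /= => /eqP.
apply: (basis_ev0 (indep_y Hy yn)); apply: ord4P => /=.
- by apply: hz; case: hb.
- by apply: hz; case: hb.
- exact: evS0.
- have := sS (y *m J) y; rewrite -evSJ => E; lra.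
Qed.

Lemma sg_neq0 : sg != 0.
Proof.
apply/eqP => s0; move: sg_eq; rewrite s0 mulr0 => /esym/eqP.
by rewrite (negbTE lam_pos).
Qed.

Lemma decomp v : exists x y, [/\ in_imR Rm x, in_ker S y & v = x + y].
Proof.
set w := v *m S *m Rm; set k := (1 + lam ^+ 2)^-1.
have hw : in_imR Rm w by exists (v *m S).
have hwJ : in_imR Rm (w *m J) by case: hw => a ->; exists (a *m J^T); rewrite KK3.
exists (- k *: w), (v + k *: w); split.
- by exists (- k *: (v *m S)); rewrite /w scalemxAl.
- rewrite /in_ker; apply: pker.
  rewrite !mulmxDl -!scalemxAl (Jh hwJ) (Jh hw).
  have -> : v *m J *m J = - v - w by rewrite -(KK1 v) addrK.
  have lp := lam_pos.
  apply/rowP => j; rewrite !mxE /k; field; by [].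
- by rewrite addrCA scaleNr addNr addr0.
Qed.

Lemma hcap v : in_imR Rm v -> in_ker S v -> v = 0.
Proof.
move=> /hspan [c1 [c2 ->]]; rewrite /in_ker => E.
have E2 := congr1 (fun a => ev a e2) E; have E1 := congr1 (fun a => ev a e1) E.
simpl in E1, E2.
rewrite !mulmxDl -!scalemxAl !evDl !evZl ev0l evS0 in E1.
rewrite !mulmxDl -!scalemxAl !evDl !evZl ev0l evS0 -/sg in E2.
have := sS e2 e1; rewrite -/sg => s21.
rewrite s21 in E1.
have sn := sg_neq0.
have c1z : c1 = 0.
  by move/eqP: E2; rewrite mulr0 addr0 mulf_eq0 (negbTE sn) orbF => /eqP.
have c2z : c2 = 0.
  by move/eqP: E1; rewrite mulr0 add0r mulrN oppr_eq0 mulf_eq0 (negbTE sn) orbF => /eqP.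
by rewrite c1z c2z !scale0r addr0.
Qed.

Section E3.
Variable e3 : vec.
Hypotheses (He3 : e3 *m S = 0) (e3n : e3 != 0).
Let e4 := e3 *m J.
Lemma e3JJ : e3 *m J *m J = - e3.
Proof. by have := KK1 e3; rewrite He3 mul0mx addr0. Qed.
Lemma He4 : e4 *m S = 0.
Proof. by rewrite /e4 KK2 He3 mul0mx. Qed.
Lemma e4J : e4 *m J = - e3.
Proof. exact: e3JJ. Qed.
Lemma bas4 : basis4 e1 e2 e3 e4.
Proof. exact: indep_y e3JJ e3n. Qed.
Let d := dualb e1 e2 e3 e4.
Lemma dE (i j : 'I_4) : ev (d i) [:: e1; e2; e3; e4]`_j = (i == j)%:R.
Proof. by apply: dualbE; case: bas4. Qed.

Lemma cov_eq (a b : vec) : (forall j : 'I_4, ev a [:: e1; e2; e3; e4]`_j = ev b [:: e1; e2; e3; e4]`_j) -> a = b.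
Proof.
move=> H; apply/eqP; rewrite -subr_eq0; apply/eqP; apply: (basis_ev0 bas4) => j.
by rewrite evBl H subrr.
Qed.

Ltac dsimp := rewrite ?(dE o0 o0, dE o0 o1, dE o0 o2, dE o0 o3, dE o1 o0, dE o1 o1, dE o1 o2, dE o1 o3,
   dE o2 o0, dE o2 o1, dE o2 o2, dE o2 o3, dE o3 o0, dE o3 o1, dE o3 o2, dE o3 o3) /=.

Lemma S1 : e1 *m S = sg *: d o1.
Proof.
apply: cov_eq; apply: ord4P => /=; rewrite evZl; dsimp.
- by rewrite evS0 mulr0.
- by rewrite mulr1.
- by rewrite sS He3 ev0l oppr0 mulr0.
- by rewrite sS He4 ev0l oppr0 mulr0.
Qed.

Lemma S2 : e2 *m S = - (sg *: d o0).
Proof.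
apply: cov_eq; apply: ord4P => /=; rewrite evNl evZl; dsimp.
- by rewrite sS -/sg mulr1.
- by rewrite evS0 mulr0 oppr0.
- by rewrite sS He3 ev0l oppr0 mulr0 oppr0.
- by rewrite sS He4 ev0l oppr0 mulr0 oppr0.
Qed.

Lemma dR0 : d o0 *m Rm = m^-1 *: e2.
Proof. by rewrite Rform /sharp2; dsimp; rewrite scale1r scale0r subr0. Qed.
Lemma dR1 : d o1 *m Rm = - (m^-1 *: e1).
Proof. by rewrite Rform /sharp2; dsimp; rewrite scale1r scale0r sub0r scalerN. Qed.
Lemma dR2 : d o2 *m Rm = 0.
Proof. by rewrite Rform /sharp2; dsimp; rewrite !scale0r subrr scaler0. Qed.
Lemma dR3 : d o3 *m Rm = 0.
Proof. by rewrite Rform /sharp2; dsimp; rewrite !scale0r subrr scaler0. Qed.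

Lemma evJT (a v : vec) : ev (a *m J^T) v = ev a (v *m J).
Proof. by rewrite ev_mulmx. Qed.

Lemma dJ0 : d o0 *m J^T = lam *: d o0.
Proof.
apply: cov_eq; apply: ord4P => /=; rewrite evJT evZl ?HJ1 ?HJ2 ?e4J -?/e4 ?evZr ?evNr; dsimp; 
  by rewrite ?mulr0 ?oppr0.
Qed.
Lemma dJ1 : d o1 *m J^T = lam *: d o1.
Proof.
apply: cov_eq; apply: ord4P => /=; rewrite evJT evZl ?HJ1 ?HJ2 ?e4J -?/e4 ?evZr ?evNr; dsimp; 
  by rewrite ?mulr0 ?oppr0.
Qed.
Lemma dJ2 : d o2 *m J^T = - d o3.
Proof.
apply: cov_eq; apply: ord4P => /=; rewrite evJT evNl ?HJ1 ?HJ2 ?e4J -?/e4 ?evZr ?evNr; dsimp; 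
  by rewrite ?mulr0 ?oppr0.
Qed.
Lemma dJ3 : d o3 *m J^T = d o2.
Proof.
apply: cov_eq; apply: ord4P => /=; rewrite evJT ?HJ1 ?HJ2 ?e4J -?/e4 ?evZr ?evNr; dsimp; 
  by rewrite ?mulr0 ?oppr0.
Qed.

Notation K := (Kop J Rm S).
Lemma Ke1 : K (e1, 0) = (lam *: e1, sg *: d o1).
Proof. by rewrite /Kop /= HJ1 S1 !mul0mx addr0 subr0. Qed.
Lemma Ke3 : K (e3, 0) = (e4, 0).
Proof. by rewrite /Kop /= He3 !mul0mx addr0 subr0. Qed.
Lemma Ke4 : K (e4, 0) = (- e3, 0).
Proof. by rewrite /Kop /= He4 e4J !mul0mx addr0 subr0. Qed.
Lemma Kd0 : K (0, d o0) = (m^-1 *: e2, - (lam *: d o0)).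
Proof. by rewrite /Kop /= dR0 dJ0 !mul0mx add0r sub0r. Qed.
Lemma Kd1 : K (0, d o1) = (- (m^-1 *: e1), - (lam *: d o1)).
Proof. by rewrite /Kop /= dR1 dJ1 !mul0mx add0r sub0r. Qed.

Lemma N1ev (l : vec) x y : ev l (nijenhuis br K x y).1 = 0.
Proof. by rewrite HN /= ev0r. Qed.

Lemma evK1 (l : vec) z : ev l (K z).1 = ev (l *m J^T) z.1 - ev z.2 (l *m Rm).
Proof. by rewrite /Kop /= evDr evJT sR. Qed.

Lemma evJ (l w : vec) : ev l (w *m J) = ev (l *m J^T) w.
Proof. exact: ev_mulmx. Qed.
Lemma evRd (k : 'I_4) (al : vec) : ev (d k) (al *m Rm) = - ev al (d k *m Rm).
Proof. exact: sR. Qed.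

Ltac nsimp := rewrite ?(dR0, dR1, dR2, dR3, dJ0, dJ1, dJ2, dJ3, evJ, evRd,
  evDr, evBr, evNr, evZr, ev0r, evDl, evBl, evNl, evZl, ev0l, ev_adt bil,
  brZl bil, brZr bil, brNl bil, brNr bil, br0l bil, br0r bil, brDl bil, brDr bil, brBl bil, brBr bil).

Lemma A21 : br e2 e1 = - br e1 e2. Proof. exact: br_anti. Qed.
Lemma A31 : br e3 e1 = - br e1 e3. Proof. exact: br_anti. Qed.
Lemma A41 : br e4 e1 = - br e1 e4. Proof. exact: br_anti. Qed.
Lemma A32 : br e3 e2 = - br e2 e3. Proof. exact: br_anti. Qed.
Lemma A42 : br e4 e2 = - br e2 e4. Proof. exact: br_anti. Qed.
Lemma A43 : br e4 e3 = - br e3 e4. Proof. exact: br_anti. Qed.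

Ltac nij := rewrite /nijenhuis KK ?Ke1 ?Ke3 ?Ke4 ?Kd0 ?Kd1 /padd /psub /popp /=; nsimp;
  rewrite ?A21 ?A31 ?A41 ?A32 ?A42 ?A43 ?alt; nsimp.

Notation C i j k := (ev (d k) (br i j)).

Lemma minv_eq0 x : m^-1 * x = 0 -> x = 0.
Proof.
by move/eqP; rewrite mulf_eq0 invr_eq0 (negbTE m_neq0) /= => /eqP.
Qed.
Lemma lp_eq0 x : (1 + lam ^+ 2) * x = 0 -> x = 0.
Proof. by move/eqP; rewrite mulf_eq0 (negbTE lam_pos) /= => /eqP. Qed.

Lemma cons_i : C e1 e2 o2 = 0 /\ C e1 e2 o3 = 0.
Proof.
have := N1ev (d o2) (e1, 0) (0, d o0); nij => H2.
have := N1ev (d o3) (e1, 0) (0, d o0); nij => H3.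
have P : lam * C e1 e2 o2 + C e1 e2 o3 = 0 by apply: minv_eq0; lra.
have Q : lam * C e1 e2 o3 - C e1 e2 o2 = 0 by apply: minv_eq0; lra.
have Z3 : C e1 e2 o3 = 0.
  apply: lp_eq0; rewrite -[RHS](addr0 0) -{1}(mulr0 lam) -{1}Q -P; ring.
split => //; move: Q; rewrite Z3 mulr0 sub0r => /eqP; rewrite oppr_eq0 => /eqP.
by [].
Qed.

Lemma cons_ii : C e1 e4 o2 = - C e1 e3 o3 /\ C e1 e4 o3 = C e1 e3 o2.
Proof.
have := N1ev (d o2) (e3, 0) (0, d o1); nij => H2.
have := N1ev (d o3) (e3, 0) (0, d o1); nij => H3.
split.
  have : C e1 e4 o2 + C e1 e3 o3 = 0 by apply: minv_eq0; lra.
  by move/eqP; rewrite addr_eq0 => /eqP.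
have : C e1 e4 o3 - C e1 e3 o2 = 0 by apply: minv_eq0; lra.
by move/eqP; rewrite subr_eq0 => /eqP.
Qed.

Lemma cons_iii : C e2 e4 o2 = - C e2 e3 o3 /\ C e2 e4 o3 = C e2 e3 o2.
Proof.
have := N1ev (d o2) (e3, 0) (0, d o0); nij => H2.
have := N1ev (d o3) (e3, 0) (0, d o0); nij => H3.
split.
  have : C e2 e4 o2 + C e2 e3 o3 = 0 by apply: minv_eq0; lra.
  by move/eqP; rewrite addr_eq0 => /eqP.
have : C e2 e4 o3 - C e2 e3 o2 = 0 by apply: minv_eq0; lra.
by move/eqP; rewrite subr_eq0 => /eqP.
Qed.

Lemma cons_iv : C e2 e3 o1 = - C e1 e3 o0.
Proof.
have := N1ev (d o0) (e1, 0) (e3, 0); nij => H.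
have : (1 + lam ^+ 2) * C e1 e3 o0 + (m^-1 * sg) * C e2 e3 o1 = 0 by rewrite expr2; lra.
rewrite sg_eq -mulrDr => /lp_eq0 /eqP; rewrite addr_eq0 => /eqP ->.
by rewrite opprK.
Qed.

Lemma cons_v : C e2 e4 o1 = - C e1 e4 o0.
Proof.
have := N1ev (d o0) (e1, 0) (e4, 0); nij => H.
have : (1 + lam ^+ 2) * C e1 e4 o0 + (m^-1 * sg) * C e2 e4 o1 = 0 by rewrite expr2; lra.
rewrite sg_eq -mulrDr => /lp_eq0 /eqP; rewrite addr_eq0 => /eqP ->.
by rewrite opprK.
Qed.


Lemma coordE v : v = ev (d o0) v *: e1 + ev (d o1) v *: e2 + ev (d o2) v *: e3 + ev (d o3) v *: e4.
Proof.
case: bas4 => _ Sp; case: (Sp v) => c ->; rewrite sum4 /=.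
rewrite !evDr !evZr; dsimp.
by apply/rowP => k; rewrite !mxE; ring.
Qed.

Lemma bform : exists a1 a2 b1 b2 b3 b4 x1 x2 y1 y2 p1 p2 q1 q2 r1 r2 : R,
  bracket_form br e1 e2 e3 e4 a1 a2 b1 b2 b3 b4 x1 x2 y1 y2 p1 p2 q1 q2 r1 r2.
Proof.
have [i2 i3] := cons_i; have [ii2 ii3] := cons_ii; have [iii2 iii3] := cons_iii.
have iv := cons_iv; have v := cons_v.
exists (C e1 e2 o0), (C e1 e2 o1), (C e3 e4 o0), (C e3 e4 o1), (C e3 e4 o2), (C e3 e4 o3).
exists (C e1 e3 o2), (C e2 e3 o2), (- C e1 e3 o3), (- C e2 e3 o3).
exists (- C e1 e3 o0), (- C e1 e4 o0), (- C e2 e3 o0), (- C e2 e4 o0).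
exists (- C e1 e3 o1), (- C e1 e4 o1).
split; [|exact: coordE| |split].
- by rewrite [LHS]coordE i2 i3 !scale0r !addr0.
- by rewrite [LHS]coordE; apply/rowP => k; rewrite !mxE; ring.
- by rewrite [LHS]coordE ii2 ii3; apply/rowP => k; rewrite !mxE; ring.
- by rewrite [LHS]coordE iv; apply/rowP => k; rewrite !mxE; ring.
- by rewrite [LHS]coordE v iii2 iii3; apply/rowP => k; rewrite !mxE; ring.
Qed.

Lemma sform u : u *m S = ((m^-1)^-1 * (1 + lam ^+ 2)) *: flat2 (d o0) (d o1) u.
Proof.
have hc : (m^-1)^-1 * (1 + lam ^+ 2) = sg.
  by rewrite invrK -sg_eq mulrA mulrV ?mul1r // unitfE m_neq0.
rewrite hc; apply: cov_eq; apply: ord4P => /=; rewrite sS /flat2 evZl evBl !evZl; dsimp.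
- by rewrite S1 evZl; ring.
- by rewrite S2 evNl evZl; ring.
- by rewrite He3 ev0l; ring.
- by rewrite He4 ev0l; ring.
Qed.
End E3.
End Lam.
End Basis.

Lemma core_part1 (e1 e2 : vec) : basis_imR Rm e1 e2 ->
  ((forall v : vec, exists x y, [/\ in_imR Rm x, in_ker S y & v = x + y]) /\
   (forall v : vec, in_imR Rm v -> in_ker S v -> v = 0)).
Proof.
move=> hb; have [a1 Ha1] : in_imR Rm e1 by case: hb.
have [a2 Ha2] : in_imR Rm e2 by case: hb.
have [lam [HJ1 HJ2]] := lam_ex hb Ha1 Ha2.
split; first by move=> v; apply: (decomp hb HJ1 HJ2).
by move=> v; apply: (hcap hb Ha1 Ha2 HJ1).
Qed.

Lemma core_part2 (e1 e2 e3 : vec) : basis_imR Rm e1 e2 -> in_ker S e3 -> e3 != 0 ->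
     let e4 := e3 *m J in
     basis4 e1 e2 e3 e4 /\
     (exists (lam a : R), [/\ a != 0,
        [/\ e1 *m J = lam *: e1, e2 *m J = lam *: e2,
            e3 *m J = e4 & e4 *m J = - e3],
        (forall al : vec, al *m Rm = a *: sharp2 e1 e2 al)
      & (forall u : vec, u *m S =
           (a^-1 * (1 + lam ^+ 2)) *:
             flat2 (dualb e1 e2 e3 e4 0) (dualb e1 e2 e3 e4 1) u)]) /\
     (exists a1 a2 b1 b2 b3 b4 x1 x2 y1 y2 p1 p2 q1 q2 r1 r2 : R,
        bracket_form br e1 e2 e3 e4 a1 a2 b1 b2 b3 b4 x1 x2 y1 y2 p1 p2 q1 q2 r1 r2).
Proof.
move=> hb He3 e3n e4.
have [a1 Ha1] : in_imR Rm e1 by case: hb.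
have [a2 Ha2] : in_imR Rm e2 by case: hb.
have [lam [HJ1 HJ2]] := lam_ex hb Ha1 Ha2.
split; first exact: (bas4 hb HJ1 HJ2 He3 e3n).
split; last exact: (bform hb Ha1 Ha2 HJ1 HJ2 He3 e3n).
exists lam, (ev a2 e1)^-1; split.
- by rewrite invr_eq0 (m_neq0 hb Ha1 Ha2).
- split => //; exact: (e3JJ He3).
- exact: (Rform hb Ha1 Ha2).
- have -> : (0 : 'I_4) = o0 by apply: val_inj.
  have -> : (1 : 'I_4) = o1 by apply: val_inj.
  exact: (sform hb Ha1 Ha2 HJ1 HJ2 He3 e3n).
Qed.
End Core.


Lemma basis_exists (R : realType) (Rm : 'M[R]_4) : skew_dual Rm -> gc_type Rm = 1%N ->
  exists e1 e2, basis_imR Rm e1 e2.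
Proof.
move=> sR Ht.
have skew : forall i j, Rm j i = - Rm i j.
  move=> i j; have := sR (stdb R j) (stdb R i).
  by rewrite !ev_stdb !stdb_mul.
have imR : forall v : 'rV[R]_4, in_imR Rm v <-> (v <= Rm)%MS.
  by move=> v; split; [case=> a ->; apply: submxMl | case/submxP => a ->; exists a].
have [E|E] : \rank Rm = 1%N \/ \rank Rm = 2%N.
  move: Ht (rank_leq_row Rm); rewrite /gc_type.
  case: (\rank Rm) => [|[|[|[|[|n]]]]] //= H L; by [left | right | move: H | move: L].
- exfalso.
  have EB := eq_row_base Rm; have FB := row_base_free Rm.
  move: EB FB; move: (row_base Rm); rewrite E => B EB FB.
  have : (Rm <= B)%MS by rewrite EB.
  case/submxP => D ED.
  have ent : forall i j, Rm i j = D i 0 * B 0 j.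
    by move=> i j; rewrite ED mxE big_ord1.
  have [j0 Hj] : exists j, B 0 j != 0.
    case: (pickP (fun j => B 0 j != 0)) => [j Hj|H0]; first by exists j.
    have B0 : B = 0.
      by apply/matrixP => i j; rewrite ord1 mxE; move/negbFE/eqP: (H0 j).
    by move: FB; rewrite /row_free B0 mxrank0.
  have [[i0 k] Hi] : exists ik : 'I_4 * 'I_4, Rm ik.1 ik.2 != 0.
    case: (pickP (fun ik : 'I_4 * 'I_4 => Rm ik.1 ik.2 != 0)) => [ik Hik|H0]; first by exists ik.
    have R0 : Rm = 0.
      by apply/matrixP => i j; rewrite mxE; move/negbFE/eqP: (H0 (i, j)).
    by move: E; rewrite R0 mxrank0.
  simpl in Hi.
  have Di : D i0 0 != 0 by move: Hi; rewrite ent; apply: contraNneq => ->; rewrite mul0r.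
  have dz : forall i, Rm i i = 0.
    move=> i; have := skew i i => /eqP; rewrite -addr_eq0 -mulr2n mulrn_eq0 /=.
    by move/eqP.
  have Bi : B 0 i0 = 0.
    move: (dz i0); rewrite ent => /eqP; rewrite mulf_eq0 (negbTE Di) /=; by move/eqP.
  have Dj : D j0 0 = 0.
    move: (dz j0); rewrite ent => /eqP; rewrite mulf_eq0 (negbTE Hj) orbF; by move/eqP.
  have := skew i0 j0; rewrite !ent Bi Dj mulr0 => /esym/eqP.
  by rewrite oppr_eq0 mulf_eq0 (negbTE Di) (negbTE Hj).
- have EB := eq_row_base Rm; have FB := row_base_free Rm.
  move: EB FB; move: (row_base Rm); rewrite E => B EB FB.
  have sub : forall v : 'rV[R]_4, (v <= B)%MS = (v <= Rm)%MS by move=> v; rewrite EB.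
  exists (row ord0 B), (row (lift ord0 ord0) B); split.
  + by apply/imR; rewrite -sub row_sub.
  + by apply/imR; rewrite -sub row_sub.
  + move=> c1 c2 Ec.
    pose w : 'rV[R]_2 := \row_j [:: c1; c2]`_j.
    have : w *m B = 0 *m B.
      by rewrite mul0mx mulmx_sum_row big_ord_recl big_ord1 /= -Ec !mxE /=.
    move/(row_free_inj FB) => /rowP W.
    have := W ord0; have := W (lift ord0 ord0); rewrite !mxE /=; by move=> -> ->.
  + move=> v /imR; rewrite -sub => /submxP [D ->].
    exists (D 0 ord0), (D 0 (lift ord0 ord0)).
    by rewrite mulmx_sum_row big_ord_recl big_ord1.
Qed.

Unset Implicit Arguments.

Theorem proposition2p1 (R : realType) (br : 'rV[R]_4 -> 'rV[R]_4 -> 'rV[R]_4)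
    (J Rm S : 'M[R]_4) :
  lie_bracket br -> gen_complex br J Rm S -> gc_type Rm = 1%N ->
  (* g = h (+) p, with h = Im R and p = ker sigma *)
  ((forall v : 'rV[R]_4, exists x y, [/\ in_imR Rm x, in_ker S y & v = x + y]) /\
   (forall v : 'rV[R]_4, in_imR Rm v -> in_ker S v -> v = 0)) /\
  (forall e1 e2 e3 : 'rV[R]_4,
     basis_imR Rm e1 e2 -> in_ker S e3 -> e3 != 0 ->
     let e4 := e3 *m J in
     basis4 e1 e2 e3 e4 /\
     (* item 1 *)
     (exists (lam a : R), [/\ a != 0,
        [/\ e1 *m J = lam *: e1, e2 *m J = lam *: e2,
            e3 *m J = e4 & e4 *m J = - e3],
        (forall al : 'rV[R]_4, al *m Rm = a *: sharp2 e1 e2 al)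
      & (forall u : 'rV[R]_4, u *m S =
           (a^-1 * (1 + lam ^+ 2)) *:
             flat2 (dualb e1 e2 e3 e4 0) (dualb e1 e2 e3 e4 1) u)]) /\
     (* item 2 *)
     (exists a1 a2 b1 b2 b3 b4 x1 x2 y1 y2 p1 p2 q1 q2 r1 r2 : R,
        bracket_form br e1 e2 e3 e4 a1 a2 b1 b2 b3 b4 x1 x2 y1 y2 p1 p2 q1 q2 r1 r2)) /\
  (* item 3: for any alternating bilinear bracket of the form of item 2
     (in any basis), Jacobi <-> the system *)
  (forall (br' : 'rV[R]_4 -> 'rV[R]_4 -> 'rV[R]_4) (f1 f2 f3 f4 : 'rV[R]_4)
          (a1 a2 b1 b2 b3 b4 x1 x2 y1 y2 p1 p2 q1 q2 r1 r2 : R),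
     bilinear_br br' -> alternating_br br' -> basis4 f1 f2 f3 f4 ->
     bracket_form br' f1 f2 f3 f4 a1 a2 b1 b2 b3 b4 x1 x2 y1 y2 p1 p2 q1 q2 r1 r2 ->
     (jacobi_br br' <->
      jacobi_system a1 a2 b1 b2 b3 b4 x1 x2 y1 y2 p1 p2 q1 q2 r1 r2)).
Proof.
move=> [bil alt jac] [sR sS [KK _ HN]] Ht.
have [f1 [f2 hb]] := basis_exists sR Ht.
split; first by eapply core_part1; eauto.
split.
  move=> e1 e2 e3 hb' He3 e3n; eapply core_part2; eauto.
move=> br' g1 g2 g3 g4 a1 a2 b1 b2 b3 b4 x1 x2 y1 y2 p1 p2 q1 q2 r1 r2 bil' alt' bas' bf'.
by eapply part3; eauto.
Qed.
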